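(* Let $0\le p_1<1/2<p_2\le 1$ and $c=\min\{1/2-p_1,\,p_2-1/2\}$. Let $\ell\ge 7$ be an integer with $\ell\ge (1/c^2)\ln(\ell+1)$. Then $|\mathbf{G}(\ell+1,[p_1\ell,p_2\ell])|\le 2^{\ell-3}$, and moreover there exists an injective map $\Psi:\mathbf{G}(\ell+1,[p_1\ell,p_2\ell])\to \mathcal{W}(\ell-2,\ell-2,[p_1(\ell-2),p_2(\ell-2)])$.
   Context: $\mathrm{wt}(\mathbf{x})$ denotes the number of ones of a binary sequence $\mathbf{x}$. $\mathbf{G}(\ell+1,[p_1\ell,p_2\ell])$ is the set of all $\mathbf{x}=x_1\dots x_{\ell+1}\in\{0,1\}^{\ell+1}$ such that at least one of the two windows $x_1\dots x_\ell$, $x_2\dots x_{\ell+1}$ has weight outside $[p_1\ell,p_2\ell]$. For reals $a\le b$ and $L\le n$, $\mathcal{W}(n,L,[a,b])$ is the set of $\mathbf{x}\in\{0,1\}^n$ all of whose length-$L$ windows $x_i\dots x_{i+L-1}$ have weight in $[a,b]$; thus $\mathcal{W}(\ell-2,\ell-2,[p_1(\ell-2),p_2(\ell-2)])$ is the set of sequences in $\{0,1\}^{\ell-2}$ with weight in $[p_1(\ell-2),p_2(\ell-2)]$. $\ln$ is the natural logarithm. *)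

(* Defs.v *)
From mathcomp Require Import all_boot all_order all_algebra.
From mathcomp Require Import all_classical all_reals all_analysis.
Set Implicit Arguments. Unset Strict Implicit. Unset Printing Implicit Defensive.
Import Order.TTheory GRing.Theory Num.Theory.
Local Open Scope ring_scope.

Definition wt (x : seq bool) : nat := count id x.

(* window x i L : the length-L window x_{i+1} ... x_{i+L} (0-based start i) *)
Definition window (x : seq bool) (i L : nat) : seq bool := take L (drop i x).

Definition wt_in {R : realType} (a b : R) (s : seq bool) : bool :=
  (a <= (wt s)%:R) && ((wt s)%:R <= b).

Definition Gset {R : realType} (ell : nat) (p1 p2 : R) : {set (ell.+1).-tuple bool} :=
  [set x : (ell.+1).-tuple bool |
     ~~ wt_in (p1 * ell%:R) (p2 * ell%:R) (window x 0 ell)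
  || ~~ wt_in (p1 * ell%:R) (p2 * ell%:R) (window x 1 ell)].

Definition Wset {R : realType} (n L : nat) (a b : R) : {set n.-tuple bool} :=
  [set x : n.-tuple bool | [forall i : 'I_n.+1, (i + L <= n)%N ==> wt_in a b (window x i L)]].

(* Main.v *)
Require Import Defs.
From mathcomp Require Import all_boot all_order all_algebra.
From mathcomp Require Import all_classical all_reals all_analysis.
From mathcomp Require Import ring lra zify.
Import Order.TTheory GRing.Theory Num.Theory.
Local Open Scope ring_scope.

Section S.
Variable R : realType.

Lemma sum_tupleS (n : nat) (F : seq bool -> R) :
  \sum_(x : (n.+1).-tuple bool) F x =
  \sum_(x : n.-tuple bool) (F (true :: x) + F (false :: x)).
Proof.
pose h := fun p : bool * n.-tuple bool => [tuple of p.1 :: p.2].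
have hb : bijective h.
  exists (fun x : (n.+1).-tuple bool => (thead x, [tuple of behead x])).
    by move=> [b t]; congr pair; apply: val_inj.
  by move=> x /=; rewrite [in RHS](tuple_eta x).
rewrite (reindex h) /=; last by apply: onW_bij.
rewrite -(pair_big xpredT xpredT (fun b (t : n.-tuple bool) => F (b :: t))) /=.
by rewrite big_bool /= -big_split /=; apply: eq_bigr => x _; rewrite addrC.
Qed.

Definition dv (s : seq bool) : R := 2 * (wt s)%:R - (size s)%:R.

Definition M (k n : nat) : R := \sum_(x : n.-tuple bool) dv x ^+ k.

Lemma dv_cons b s : dv (b :: s) = dv s + (if b then 1 else -1).
Proof. rewrite /dv /wt /= -!(addn1 (size s)) !natrD; case: b => /=; rewrite ?add0n ?natrD; ring. Qed.

Lemma M_rec k n : M k n.+1 = \sum_(x : n.-tuple bool) ((dv x + 1) ^+ k + (dv x - 1) ^+ k).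
Proof. rewrite /M (sum_tupleS _ (fun s => dv s ^+ k)); apply: eq_bigr => x _; by rewrite !dv_cons. Qed.

Lemma M0 n : M 0 n = (2 ^ n)%:R.
Proof. rewrite /M; under eq_bigr do rewrite expr0.
by rewrite sumr_const card_tuple card_bool. Qed.

Lemma M_lin k n (a b c d : R) :
  (forall x : R, (x + 1) ^+ k + (x - 1) ^+ k = a * x ^+ 6 + b * x ^+ 4 + c * x ^+ 2 + d) ->
  M k n.+1 = a * M 6 n + b * M 4 n + c * M 2 n + d * M 0 n.
Proof.
move=> H; rewrite M_rec; under eq_bigr do rewrite H.
rewrite !big_split /= /M !mulr_sumr; congr (_ + _ + _ + _).
by apply: eq_bigr => x _; rewrite expr0 mulr1.
Qed.

Lemma M2E n : M 2 n = n%:R * (2 ^ n)%:R.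
Proof.
elim: n => [|n IH]; first by rewrite /M big1 => [|x _]; [ring | rewrite /dv (size_tuple x) tuple0 /wt /=; ring].
rewrite (@M_lin 2 n 0 0 2 2); last by move=> x; ring.
by rewrite IH !M0 expnS natrM -natr1; ring.
Qed.

Lemma M4E n : M 4 n = (3 * n%:R ^+ 2 - 2 * n%:R) * (2 ^ n)%:R.
Proof.
elim: n => [|n IH]; first by rewrite /M big1 => [|x _]; [ring | rewrite /dv (size_tuple x) tuple0 /wt /=; ring].
rewrite (@M_lin 4 n 0 2 12 2); last by move=> x; ring.
by rewrite IH M2E !M0 expnS natrM -natr1; ring.
Qed.

Lemma M6E n : M 6 n = (15 * n%:R ^+ 3 - 30 * n%:R ^+ 2 + 16 * n%:R) * (2 ^ n)%:R.
Proof.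
elim: n => [|n IH]; first by rewrite /M big1 => [|x _]; [ring | rewrite /dv (size_tuple x) tuple0 /wt /=; ring].
rewrite (@M_lin 6 n 2 30 30 2); last by move=> x; ring.
by rewrite IH M4E M2E !M0 expnS natrM -natr1; ring.
Qed.

Lemma M6_le n : M 6 n <= 15 * n%:R ^+ 3 * (2 ^ n)%:R.
Proof.
rewrite M6E ler_pM2r ?ltr0n ?expn_gt0 //.
case: n => [|n]; first by rewrite mulr0n; lra.
have : 1 <= (n.+1)%:R :> R by rewrite ler1n.
move: ((n.+1)%:R : R) => N HN; nra.
Qed.


Lemma dv_rev s : dv (rev s) = dv s.
Proof. by rewrite /dv /wt count_rev size_rev. Qed.

Lemma bad_bound (p1 p2 c : R) (n : nat) (s : seq bool) :
  0 <= c -> c <= 1/2 - p1 -> c <= p2 - 1/2 -> size s = n ->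
  ~~ wt_in (p1 * n%:R) (p2 * n%:R) s -> (2 * c * n%:R) ^+ 6 <= dv s ^+ 6.
Proof.
move=> c0 c1 c2 sz; rewrite /wt_in negb_and -!ltNge /dv sz.
have N0 : 0 <= n%:R :> R by [].
have cN : 0 <= 2 * c * n%:R by rewrite !mulr_ge0.
move: ((wt s)%:R : R) (n%:R : R) cN N0 => w N cN N0.
case/orP => H.
  have -> : (2 * w - N) ^+ 6 = (N - 2 * w) ^+ 6 by ring.
  apply: lerXn2r; rewrite ?nnegrE //; nra.
apply: lerXn2r; rewrite ?nnegrE //; nra.
Qed.

Lemma sq_le (a b : R) : 0 <= a -> a <= b -> a * a <= b * b.
Proof. by move=> a0 ab; apply: ler_pM. Qed.

Lemma exp2_le8 : expR (2 : R) <= 8.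
Proof.
have e0 : 0 < expR (1/20 : R) by apply: expR_gt0.
have e1 : expR (1/20 : R) <= 20/19.
  have h := expR_ge1Dx (- (1/20) : R).
  have h' := expRxMexpNx_1 (1/20 : R).
  move: (expR (1/20 : R)) (expR (- (1/20)) : R) e0 h h' => a b a0 hb hab; nra.
have -> : (2 : R) = 40%:R * (1/20) by rewrite -[40%:R]/(40 : R); lra.
rewrite expRM_natl.
move: (expR (1/20 : R)) e0 e1 => e e0 e1.
have h2 : e ^+ 2 <= (11081/10000) by rewrite expr2; nra.
have h4 : e ^+ 4 <= (1228/1000).
  have -> : e ^+ 4 = (e ^+ 2) ^+ 2 by rewrite -exprM.
  have : 0 <= e ^+ 2 by rewrite exprn_ge0 // ltW.
  move: (e ^+ 2) h2 => a ha a0; rewrite expr2; have := @sq_le _ _ a0 ha; lra.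
have h8 : e ^+ 8 <= (1508/1000).
  have -> : e ^+ 8 = (e ^+ 4) ^+ 2 by rewrite -exprM.
  have : 0 <= e ^+ 4 by rewrite exprn_ge0 // ltW.
  move: (e ^+ 4) h4 => a ha a0; rewrite expr2; have := @sq_le _ _ a0 ha; lra.
have h16 : e ^+ 16 <= (22741/10000).
  have -> : e ^+ 16 = (e ^+ 8) ^+ 2 by rewrite -exprM.
  have : 0 <= e ^+ 8 by rewrite exprn_ge0 // ltW.
  move: (e ^+ 8) h8 => a ha a0; rewrite expr2; have := @sq_le _ _ a0 ha; lra.
have h32 : e ^+ 32 <= (5172/1000).
  have -> : e ^+ 32 = (e ^+ 16) ^+ 2 by rewrite -exprM.
  have : 0 <= e ^+ 16 by rewrite exprn_ge0 // ltW.
  move: (e ^+ 16) h16 => a ha a0; rewrite expr2; have := @sq_le _ _ a0 ha; lra.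
have -> : e ^+ 40 = e ^+ 32 * e ^+ 8 by rewrite -exprD.
have : 0 <= e ^+ 32 by rewrite exprn_ge0 // ltW.
have : 0 <= e ^+ 8 by rewrite exprn_ge0 // ltW.
move: (e ^+ 32) (e ^+ 8) h32 h8 => a b ha hb b0 a0; nra.
Qed.


Lemma sum_behead n (F : seq bool -> R) :
  \sum_(x : (n.+1).-tuple bool) F (behead x) = 2 * \sum_(y : n.-tuple bool) F y.
Proof.
rewrite (sum_tupleS _ (fun s => F (behead s))) /= mulr_sumr.
by apply: eq_bigr => y _; rewrite mulr2n mulrDl mul1r.
Qed.

Lemma sum_take n (F : seq bool -> R) : (forall s, F (rev s) = F s) ->
  \sum_(x : (n.+1).-tuple bool) F (take n x) = 2 * \sum_(y : n.-tuple bool) F y.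
Proof.
move=> hF.
rewrite (reindex_inj (h := @rev_tuple _ _) (fun x y (e : rev_tuple x = rev_tuple y) =>
   val_inj (etrans (esym (revK x)) (etrans (f_equal (fun t => rev (val t)) e) (revK y))))) /=.
rewrite (sum_tupleS _ (fun s => F (take n (rev s)))) /= mulr_sumr.
apply: eq_bigr => y _; rewrite !rev_cons -!cats1 !take_size_cat ?size_rev ?size_tuple // hF.
by rewrite mulr2n mulrDl mul1r.
Qed.

Lemma cnt_bound6 (T : finType) (A : {set T}) (f : T -> R) (t : R) :
  (forall x, 0 <= f x) -> (forall x, x \in A -> t <= f x) ->
  #|A|%:R * t <= \sum_x f x.
Proof.
move=> f0 fA; rewrite mulrC mulr_natr -sumr_const.
apply: (@le_trans _ _ (\sum_(x in A) f x)); first by apply: ler_sum => x /fA.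
rewrite [X in _ <= X](bigID (fun x => x \in A)) /= lerDl.
by apply: sumr_ge0 => x _.
Qed.

Lemma pow6_ge0 (y : R) : 0 <= y ^+ 6.
Proof. by rewrite (_ : 6 = 3 * 2)%N // exprM sqr_ge0. Qed.

End S.

Lemma inj_exists (T U : finType) (u0 : U) (A : {set T}) (B : {set U}) :
  (#|A| <= #|B|)%N ->
  exists f : T -> U, {in A &, injective f} /\ (forall x, x \in A -> f x \in B).
Proof.
move=> hAB.
pose f x := nth u0 (enum B) (index x (enum A)).
have hi : forall x, x \in A -> (index x (enum A) < size (enum B))%N.
  move=> x xA; apply: (leq_trans _ (_ : size (enum A) <= _)%N).
    by rewrite index_mem mem_enum.
  by rewrite -!cardE.
exists f; split.
  move=> x y xA yA e.
  have := congr1 (fun u => index u (enum B)) e; rewrite /= /f.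
  rewrite !index_uniq ?enum_uniq ?hi // => e'.
  by move/(congr1 (nth x (enum A))): e'; rewrite !nth_index ?mem_enum.
by move=> x xA; rewrite /f -mem_enum mem_nth // hi.
Qed.

Lemma natfact1 a b X : (a + b = X * 2)%N -> (2 * b <= X * 2)%N -> (X <= a)%N.
Proof. lia. Qed.

Lemma natfact2 m : (1 <= m)%N -> (2 ^ m = 2 ^ (m - 1) * 2)%N.
Proof. by move=> hm; rewrite -{1}(subnK hm) expnD. Qed.

Lemma natfact3 i n : (i + n <= n)%N -> i = 0%N.
Proof. lia. Qed.

Theorem theorem6 (R : realType) (p1 p2 : R) (ell : nat) :
  0 <= p1 -> p1 < 1 / 2 -> 1 / 2 < p2 -> p2 <= 1 ->
  (7 <= ell)%N ->
  (let c := Num.min (1 / 2 - p1) (p2 - 1 / 2) in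
   ell%:R >= (c ^+ 2)^-1 * ln (ell.+1)%:R) ->
  (#|Gset ell p1 p2| <= 2 ^ (ell - 3))%N /\
  exists Psi : (ell.+1).-tuple bool -> (ell - 2).-tuple bool,
    {in Gset ell p1 p2 &, injective Psi} /\
    (forall x, x \in Gset ell p1 p2 ->
       Psi x \in Wset (ell - 2) (ell - 2) (p1 * (ell - 2)%:R) (p2 * (ell - 2)%:R)).
Proof.
move=> p10 p1h p2h p21 l7.
set c := Num.min (1 / 2 - p1) (p2 - 1 / 2) => /= hl.
have c0 : 0 < c by rewrite lt_min; apply/andP; split; lra.
have := le_min c (1 / 2 - p1) (p2 - 1 / 2); rewrite lexx => /esym/andP[c1 c2].
have ch : c <= 1 / 2 by lra.
have cc0 : 0 < c ^+ 2 by rewrite exprn_gt0.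
have hln : 2 <= ln (ell.+1)%:R :> R.
  rewrite -{1}(expRK 2) ler_ln ?posrE ?expR_gt0 ?ltr0n //.
  apply: (le_trans (exp2_le8 R)); rewrite ler_nat; lia.
have hcl : 2 <= c ^+ 2 * ell%:R.
  apply: (le_trans hln); rewrite -(ler_pM2l cc0) in hl.
  by rewrite mulrA mulfV ?mul1r in hl; [| rewrite gt_eqF].
pose G := Gset ell p1 p2.
have hG : (#|G|%:R : R) * (2 * c * ell%:R) ^+ 6 <= 60 * ell%:R ^+ 3 * (2 ^ ell)%:R.
  apply: (le_trans (@cnt_bound6 R _ G (fun x : (ell.+1).-tuple bool =>
       dv R (take ell x) ^+ 6 + dv R (behead x) ^+ 6) _ _ _)).
  - by move=> x; rewrite addr_ge0 ?pow6_ge0.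
  - move=> x; rewrite inE /window drop0 drop1 (take_oversize (n := ell) (s := behead x)); last first.
      by rewrite size_behead size_tuple.
    case/orP => H.
      rewrite -[X in X <= _]addr0; apply: lerD; last exact: pow6_ge0.
      apply: (@bad_bound R p1 p2 c) => //; [exact: ltW|].
      by rewrite size_take size_tuple ltnSn.
    rewrite -[X in X <= _]add0r; apply: lerD; first exact: pow6_ge0.
    apply: (@bad_bound R p1 p2 c) => //; [exact: ltW|].
    by rewrite size_behead size_tuple.
  rewrite big_split /= (sum_take R ell (fun s => dv R s ^+ 6)); last by move=> s; rewrite dv_rev.
  rewrite (sum_behead R ell (fun s => dv R s ^+ 6)) -/(M R 6 ell).
  have := M6_le R ell; lra.
have hG8 : (8 * #|G| <= 2 ^ ell)%N.
  rewrite -(ler_nat R) natrM.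
  have L0 : 0 < ell%:R ^+ 3 :> R by rewrite exprn_gt0 // ltr0n; lia.
  have u3 : 8 <= (c ^+ 2 * ell%:R) ^+ 3.
    move: (c ^+ 2 * ell%:R) hcl => u hu; rewrite !exprS expr0 mulr1; nra.
  have e6 : (2 * c * ell%:R) ^+ 6 = 64 * (c ^+ 2 * ell%:R) ^+ 3 * ell%:R ^+ 3 by ring.
  rewrite e6 in hG.
  have A0 : 0 <= (#|G|%:R : R) by [].
  move: (#|G|%:R : R) ((c ^+ 2 * ell%:R) ^+ 3) (ell%:R ^+ 3 : R) ((2 ^ ell)%:R : R) A0 u3 L0 hG
    => A u L P A0 u3 L0 hG.
  have : (8%:R * A) * L <= P * L.
    have : 0 <= A * L * (u - 8) by apply: mulr_ge0; [apply: mulr_ge0 => //; exact: ltW | lra].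
    nra.
  by rewrite ler_pM2r.
have hGc : (#|G| <= 2 ^ (ell - 3))%N.
  have e : forall m, (3 <= m)%N -> (2 ^ m = 2 ^ (m - 3) * 8)%N.
    by move=> m hm; rewrite -{1}(subnK hm) expnD.
  rewrite (e ell (leq_trans (isT : (3 <= 7)%N) l7)) mulnC leq_pmul2r // in hG8.
split; first exact: hGc.
have l2 : (2 <= ell)%N by apply: leq_trans l7.
have l3 : (3 <= ell)%N by apply: leq_trans l7.
set n := (ell - 2)%N.
pose W := Wset n n (p1 * n%:R) (p2 * n%:R).
have hn : n%:R = ell%:R - 2 :> R by rewrite natrB.
have n1 : (1 <= n)%N by rewrite /n subn_gt0; apply: leq_trans l7.
have n0 : 0 < n%:R :> R by rewrite ltr0n.
have hcn : 3 / 2 <= c ^+ 2 * n%:R.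
  rewrite hn; have : c ^+ 2 <= 1 / 4 by rewrite expr2; nra.
  lra.
have hB : #|~: W|%:R * (2 * c * n%:R) ^+ 6 <= 15 * n%:R ^+ 3 * (2 ^ n)%:R.
  apply: le_trans (M6_le R n).
  apply: (@cnt_bound6 R _ (~: W) (fun x => dv R x ^+ 6)); first by move=> x; exact: pow6_ge0.
  move=> x; rewrite inE => xW.
  apply: (@bad_bound R p1 p2 c n) => //; [exact: ltW | by rewrite size_tuple |].
  apply: contra xW => hx; rewrite inE; apply/forallP => i; apply/implyP => hi.
  have i0 : nat_of_ord i = 0%N.
    exact: natfact3 hi.
  by rewrite /window i0 drop0 take_oversize ?size_tuple.
have hB2 : (2 * #|~: W| <= 2 ^ n)%N.
  rewrite -(ler_nat R) natrM.
  have L0 : 0 < n%:R ^+ 3 :> R by rewrite exprn_gt0.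
  have u3 : 27 / 8 <= (c ^+ 2 * n%:R) ^+ 3.
    move: (c ^+ 2 * n%:R) hcn => u hu; rewrite !exprS expr0 mulr1; nra.
  have e6 : (2 * c * n%:R) ^+ 6 = 64 * (c ^+ 2 * n%:R) ^+ 3 * n%:R ^+ 3 by ring.
  rewrite e6 in hB.
  have A0 : 0 <= (#|~: W|%:R : R) by [].
  move: (#|~: W|%:R : R) ((c ^+ 2 * n%:R) ^+ 3) (n%:R ^+ 3 : R) ((2 ^ n)%:R : R) A0 u3 L0 hB
    => A u L P A0 u3 L0 hB.
  have : (2%:R * A) * L <= P * L.
    have : 0 <= A * L * (u - 27 / 8) by apply: mulr_ge0; [apply: mulr_ge0 => //; exact: ltW | lra].
    nra.
  by rewrite ler_pM2r.
have hW : (2 ^ (ell - 3) <= #|W|)%N.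
  have hc := cardsC W; rewrite card_tuple card_bool (natfact2 n n1) in hc.
  rewrite (natfact2 n n1) in hB2.
  have -> : (ell - 3 = n - 1)%N by rewrite /n -subnDA.
  exact: natfact1 hc hB2.
have [Psi [Pinj PW]] := @inj_exists _ _ (nseq_tuple n false) G W (leq_trans hGc hW).
by exists Psi; split.
Qed.
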